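(* Let $$k_u=\frac{1}{2\pi}\Big(1+\sqrt2\sum_{m=1}^{\infty}\frac{\beta_m}{\sinh\beta_m}\Big).$$ Then $k_u<\infty$, and the PZD conditional density satisfies the following bounds. (1) For all $r>0$, $r_0\ge0$ and $\phi,\phi_0\in[0,2\pi)$: $$p(r,\phi\mid r_0,\phi_0)<k_u\,p_{R|R_0}(r\mid r_0).$$ Moreover, for all $r,r_0\ge0$: $$p_{R|R_0}(r\mid r_0)\le\frac{2r}{\sigma^2\mathcal L}e^{-\frac{(r-r_0)^2}{\sigma^2\mathcal L}}\le\frac{2r}{\sigma^2\mathcal L}.$$ (2) For all $r,r_0\ge0$ and $\phi,\phi_0$: $$p(r,\phi\mid r_0,\phi_0)\ge\frac{1}{2\pi}\,p_{R|R_0}(r\mid r_0)\,(1-\xi(r_0)),$$ where $$\xi(r_0)=\sqrt2\,e^{-\left(\Re(a_1)-\frac{1}{\sigma^2\mathcal L}\right)r_0^2}\sum_{m=1}^\infty\frac{\beta_m}{\sinh\beta_m}.$$ Furthermore, $\xi(r_0)\to0$ as $r_0\to\infty$.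
   Context: Fix constants $\gamma>0$, $\sigma>0$, $\mathcal L>0$, and let $j=\sqrt{-1}$. For $m\in\mathbb N$ let $\beta_m=\sqrt{m\gamma/2}\,\sigma\mathcal L$ and $$a_m=\frac{\sqrt{jm\gamma}}{\sigma}\coth\!\big(\sqrt{jm\gamma\sigma^2}\,\mathcal L\big),\qquad b_m=\frac{\sqrt{jm\gamma}}{\sigma}\,\frac{1}{\sinh\!\big(\sqrt{jm\gamma\sigma^2}\,\mathcal L\big)},$$ with principal square roots. $I_m$ denotes the modified Bessel function of the first kind of order $m$. The PZD channel conditional density (input polar coordinates $(r_0,\phi_0)$, output polar coordinates $(r,\phi)$) is $$p(r,\phi\mid r_0,\phi_0)=\frac{1}{2\pi}p_{R|R_0}(r\mid r_0)+\frac1\pi\sum_{m\ge1}\Re\!\Big(C_m(r,r_0)\,e^{jm(\phi-\phi_0-\gamma r_0^2\mathcal L)}\Big),$$ where $$p_{R|R_0}(r\mid r_0)=\frac{2r}{\sigma^2\mathcal L}e^{-\frac{r^2+r_0^2}{\sigma^2\mathcal L}}I_0\!\Big(\frac{2rr_0}{\sigma^2\mathcal L}\Big),\qquad C_m(r,r_0)=r\,b_m\,e^{-a_m(r^2+r_0^2)}I_m(2b_m r_0 r).$$ *)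

(* Defs.v *)
From Stdlib Require Import Reals Lra Arith Factorial ClassicalEpsilon.
Open Scope R_scope.

Definition Cx : Type := (R * R)%type.
Definition Cre (z : Cx) : R := fst z.
Definition Cim (z : Cx) : R := snd z.
Definition Creal (x : R) : Cx := (x, 0).
Definition Cj : Cx := (0, 1).
Definition Cadd (z w : Cx) : Cx := (fst z + fst w, snd z + snd w).
Definition Cneg (z : Cx) : Cx := (- fst z, - snd z).
Definition Cmul (z w : Cx) : Cx :=
  (fst z * fst w - snd z * snd w, fst z * snd w + snd z * fst w).
Definition Cscal (a : R) (z : Cx) : Cx := (a * fst z, a * snd z).
Definition Cinv (z : Cx) : Cx :=
  let d := fst z * fst z + snd z * snd z in (fst z / d, - snd z / d).
Definition Cdiv (z w : Cx) : Cx := Cmul z (Cinv w).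
Fixpoint Cpow (z : Cx) (n : nat) : Cx :=
  match n with O => (1, 0) | S k => Cmul z (Cpow z k) end.
Definition Cexp (z : Cx) : Cx := (exp (fst z) * cos (snd z), exp (fst z) * sin (snd z)).
(* principal square root (branch cut on the negative real axis, Re >= 0) *)
Definition Csqrt (z : Cx) : Cx :=
  let r := sqrt (fst z * fst z + snd z * snd z) in
  (sqrt ((r + fst z) / 2),
   if Rle_dec 0 (snd z) then sqrt ((r - fst z) / 2) else - sqrt ((r - fst z) / 2)).
Definition Csinh (z : Cx) : Cx := Cscal (/ 2) (Cadd (Cexp z) (Cneg (Cexp (Cneg z)))).
Definition Ccosh (z : Cx) : Cx := Cscal (/ 2) (Cadd (Cexp z) (Cexp (Cneg z))).
Definition Ccoth (z : Cx) : Cx := Cdiv (Ccosh z) (Csinh z).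

Definition Rseries (f : nat -> R) : R :=
  epsilon (inhabits 0) (fun l => infinite_sum f l).
Definition Csum (f : nat -> Cx) (n : nat) : Cx :=
  (sum_f_R0 (fun k => fst (f k)) n, sum_f_R0 (fun k => snd (f k)) n).
Definition Cseries (f : nat -> Cx) : Cx :=
  (Rseries (fun k => fst (f k)), Rseries (fun k => snd (f k))).

Definition BesselI (m : nat) (z : Cx) : Cx :=
  Cseries (fun k => Cscal (/ (INR (fact k) * INR (fact (k + m))))
                          (Cpow (Cscal (/ 2) z) (2 * k + m))).
Definition BesselI_R (m : nat) (x : R) : R := fst (BesselI m (Creal x)).

Definition beta (gamma sigma L : R) (m : nat) : R :=
  sqrt (INR m * gamma / 2) * sigma * L.

Definition a_m (gamma sigma L : R) (m : nat) : Cx :=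
  Cmul (Cscal (/ sigma) (Csqrt (Cscal (INR m * gamma) Cj)))
       (Ccoth (Cscal L (Csqrt (Cscal (INR m * gamma * sigma ^ 2) Cj)))).
Definition b_m (gamma sigma L : R) (m : nat) : Cx :=
  Cmul (Cscal (/ sigma) (Csqrt (Cscal (INR m * gamma) Cj)))
       (Cinv (Csinh (Cscal L (Csqrt (Cscal (INR m * gamma * sigma ^ 2) Cj))))).

Definition pR (gamma sigma L : R) (r r0 : R) : R :=
  2 * r / (sigma ^ 2 * L) * exp (- (r ^ 2 + r0 ^ 2) / (sigma ^ 2 * L))
  * BesselI_R 0 (2 * r * r0 / (sigma ^ 2 * L)).

Definition Cm (gamma sigma L : R) (m : nat) (r r0 : R) : Cx :=
  Cmul (Cscal r (b_m gamma sigma L m))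
    (Cmul (Cexp (Cneg (Cscal (r ^ 2 + r0 ^ 2) (a_m gamma sigma L m))))
          (BesselI m (Cscal (2 * r0 * r) (b_m gamma sigma L m)))).

(* p(r, phi | r0, phi0) ; the series is over m >= 1 (index n = m - 1) *)
Definition pdens (gamma sigma L : R) (r phi r0 phi0 : R) : R :=
  / (2 * PI) * pR gamma sigma L r r0
  + / PI * Rseries (fun n =>
      let m := S n in
      fst (Cmul (Cm gamma sigma L m r r0)
                (Cexp (0, INR m * (phi - phi0 - gamma * r0 ^ 2 * L))))).

(* the series sum_{m>=1} beta_m / sinh beta_m, as a function of n = m - 1 *)
Definition bterm (gamma sigma L : R) (n : nat) : R :=
  beta gamma sigma L (S n) / sinh (beta gamma sigma L (S n)).

Definition k_u (gamma sigma L : R) : R :=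
  / (2 * PI) * (1 + sqrt 2 * Rseries (bterm gamma sigma L)).

Definition xi (gamma sigma L : R) (r0 : R) : R :=
  sqrt 2 * exp (- (fst (a_m gamma sigma L 1) - / (sigma ^ 2 * L)) * r0 ^ 2)
  * Rseries (bterm gamma sigma L).

(* Main.v *)
From Pilot Require Import Defs.
From Stdlib Require Import Reals Lra Lia Psatz Factorial ClassicalEpsilon FunctionalExtensionality.
From Coquelicot Require Import Coquelicot.
Import Pilot.Defs.
Open Scope R_scope.

Definition P0 x := cosh x - cos x.
Definition P1 x := sinh x + sin x.
Definition P2 x := cosh x + cos x.
Definition P3 x := sinh x - sin x.
Fixpoint Qf (n : nat) : R -> R := match n with
 | O => P0 | 1%nat => P1 | 2%nat => P2 | 3%nat => P3 | S (S (S (S k))) => Qf k end.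

Definition Qcase (n : nat) : Prop :=
  (Qf n = P0 /\ Qf (S n) = P1) \/ (Qf n = P1 /\ Qf (S n) = P2) \/
  (Qf n = P2 /\ Qf (S n) = P3) \/ (Qf n = P3 /\ Qf (S n) = P0).

Lemma Qf_cases : forall n, Qcase n.
Proof.
  assert (H : forall n, Qcase n /\ Qcase (S n) /\ Qcase (S (S n)) /\ Qcase (S (S (S n)))).
  { induction n as [|n IH].
    - unfold Qcase; simpl; tauto.
    - destruct IH as [H0 [H1 [H2 H3]]]. split; [exact H1|split; [exact H2|split; [exact H3|]]].
      exact H0. }
  intro n; apply H.
Qed.

Lemma P0_der x : is_derive P0 x (P1 x).
Proof. unfold P0, P1, cosh, sinh. auto_derive; auto. field. Qed.
Lemma P1_der x : is_derive P1 x (P2 x).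
Proof. unfold P1, P2, cosh, sinh. auto_derive; auto. field. Qed.
Lemma P2_der x : is_derive P2 x (P3 x).
Proof. unfold P2, P3, cosh, sinh. auto_derive; auto. field. Qed.
Lemma P3_der x : is_derive P3 x (P0 x).
Proof. unfold P3, P0, cosh, sinh. auto_derive; auto. field. Qed.

Lemma Qf_der n x : is_derive (Qf n) x (Qf (S n) x).
Proof.
  destruct (Qf_cases n) as [[A B]|[[A B]|[[A B]|[A B]]]]; rewrite A, B;
  auto using P0_der, P1_der, P2_der, P3_der.
Qed.

Lemma Qf_Derive_n j n x : Derive_n (Qf j) n x = Qf (n + j) x.
Proof.
  revert x; induction n as [|n IH]; intro x.
  - reflexivity.
  - simpl. rewrite (Derive_ext _ (Qf (n + j)) x IH).
    apply is_derive_unique. apply Qf_der.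
Qed.

Lemma Qf_ex_derive_n j n x : ex_derive_n (Qf j) n x.
Proof.
  destruct n as [|n]; simpl; auto.
  apply (ex_derive_ext (Qf (n + j))).
  - intro t; symmetry; apply Qf_Derive_n.
  - eexists; apply Qf_der.
Qed.

Lemma Qf_bound n x : 0 <= x -> Rabs (Qf n x) <= 2 * exp x.
Proof.
  intro hx.
  assert (e1 : 1 <= exp x).
  { rewrite <- exp_0. destruct (Rle_lt_or_eq_dec _ _ hx) as [h|h].
    left; apply exp_increasing; auto. subst; lra. }
  assert (e2 : 0 < exp (-x) <= 1).
  { split. apply exp_pos. rewrite <- exp_0. destruct (Rle_lt_or_eq_dec _ _ hx) as [h|h].
    left; apply exp_increasing; lra. subst. rewrite Ropp_0; lra. }
  pose proof (COS_bound x); pose proof (SIN_bound x).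
  destruct (Qf_cases n) as [[A B]|[[A B]|[[A B]|[A B]]]]; rewrite A;
  unfold P0, P1, P2, P3, cosh, sinh; apply Rabs_le; lra.
Qed.

Lemma Qf_taylor j u n : 0 < u ->
  Rabs (Qf j u - sum_f_R0 (fun m => u ^ m / INR (fact m) * Qf (m + j) 0) n)
  <= 2 * exp u * (u ^ S n / INR (fact (S n))).
Proof.
  intro hu.
  destruct (Taylor_Lagrange (Qf j) n 0 u hu) as [z [hz E]].
  { intros; apply Qf_ex_derive_n. }
  rewrite E. rewrite Rminus_0_r.
  rewrite (sum_eq _ (fun m => u ^ m / INR (fact m) * Qf (m + j) 0)).
  2:{ intros; rewrite Qf_Derive_n; reflexivity. }
  rewrite Qf_Derive_n.
  replace (sum_f_R0 (fun m : nat => u ^ m / INR (fact m) * Qf (m + j) 0) n +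
     u ^ S n / INR (fact (S n)) * Qf (S n + j) z -
     sum_f_R0 (fun m : nat => u ^ m / INR (fact m) * Qf (m + j) 0) n)
    with (u ^ S n / INR (fact (S n)) * Qf (S n + j) z) by ring.
  rewrite Rabs_mult. rewrite Rmult_comm.
  apply Rmult_le_compat.
  - apply Rabs_pos.
  - apply Rabs_pos.
  - apply Rle_trans with (2 * exp z).
    + apply Qf_bound; lra.
    + apply Rmult_le_compat_l; [lra|]. left; apply exp_increasing; lra.
  - rewrite Rabs_right; [lra|]. apply Rle_ge. apply Rcomplements.Rdiv_le_0_compat.
    apply pow_le; lra. apply INR_fact_lt_0.
Qed.

Lemma Qf_lim j u : 0 < u ->
  is_lim_seq (fun n => sum_f_R0 (fun m => u ^ m / INR (fact m) * Qf (m + j) 0) n) (Qf j u).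
Proof.
  intro hu. apply is_lim_seq_Reals. intros eps heps.
  assert (hE : 0 < 2 * exp u) by (pose proof (exp_pos u); lra).
  destruct (cv_speed_pow_fact u (eps / (2 * exp u))) as [N HN].
  { apply Rdiv_lt_0_compat; auto. }
  exists N. intros n hn. unfold R_dist. rewrite Rabs_minus_sym.
  eapply Rle_lt_trans. apply Qf_taylor; auto.
  specialize (HN (S n) ltac:(lia)). unfold R_dist in HN. rewrite Rminus_0_r in HN.
  apply Rle_lt_trans with (2 * exp u * Rabs (u ^ S n / INR (fact (S n)))).
  apply Rmult_le_compat_l; [lra| apply RRle_abs].
  apply Rmult_lt_compat_l with (r := 2 * exp u) in HN; auto.
  replace (2 * exp u * (eps / (2 * exp u))) with eps in HN by (field; lra). exact HN.
Qed.

Definition ec (m : nat) : R := Qf m 0 / INR (fact m).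

Lemma Qf0_vals m : Qf m 0 = 0 \/ Qf m 0 = 2.
Proof.
  destruct (Qf_cases m) as [[A _]|[[A _]|[[A _]|[A _]]]]; rewrite A;
  unfold P0, P1, P2, P3; rewrite ?cosh_0, ?sinh_0, ?cos_0, ?sin_0; lra.
Qed.

Lemma ec_nonneg m : 0 <= ec m.
Proof.
  unfold ec. pose proof (INR_fact_lt_0 m).
  destruct (Qf0_vals m) as [h|h]; rewrite h; apply Rcomplements.Rdiv_le_0_compat; lra.
Qed.

Lemma ec_m2 m : 0 <= (INR m - 2) * ec m.
Proof.
  destruct m as [|[|m]].
  - unfold ec; simpl Qf; unfold P0; rewrite cosh_0, cos_0. simpl. lra.
  - unfold ec; simpl Qf; unfold P1; rewrite sinh_0, sin_0. simpl. lra.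
  - apply Rmult_le_pos; [|apply ec_nonneg].
    rewrite !S_INR. pose proof (pos_INR m). lra.
Qed.

Lemma ec6 : 0 < ec 6.
Proof.
  unfold ec. simpl Qf. unfold P2. rewrite cosh_0, cos_0.
  apply Rdiv_lt_0_compat. lra. apply INR_fact_lt_0.
Qed.

Lemma ec2 : ec 2 = 1.
Proof. unfold ec. simpl Qf. unfold P2. rewrite cosh_0, cos_0. simpl. field. Qed.

Definition Phs (a : nat -> R) n x := sum_f_R0 (fun m => a m * x ^ m) n.
Definition Pss (a : nat -> R) n x := sum_f_R0 (fun m => INR m * a m * x ^ m) n.

Lemma sum_ge_term f n k : (forall i, 0 <= f i) -> (k <= n)%nat -> f k <= sum_f_R0 f n.
Proof.
  intros hf hk. induction n as [|n IH].
  - inversion hk; simpl; lra.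
  - simpl. destruct (Nat.eq_dec k (S n)) as [e|e].
    + subst. pose proof (cond_pos_sum f n hf). lra.
    + pose proof (hf (S n)). assert (k <= n)%nat by lia. specialize (IH H0). lra.
Qed.

Lemma sum_nonneg_upto f n : (forall j, (j <= n)%nat -> 0 <= f j) -> 0 <= sum_f_R0 f n.
Proof.
  induction n as [|n IH]; intro h; simpl.
  - apply h; lia.
  - pose proof (h (S n) (le_n _)). assert (0 <= sum_f_R0 f n) by (apply IH; intros; apply h; lia). lra.
Qed.

Definition Gf a N n u v := INR N * v ^ N * Phs a n u + u ^ N * Pss a n v
  - INR N * u ^ N * Phs a n v - v ^ N * Pss a n u.

Lemma Gf_eq a N n u v : Gf a N n u v =
  sum_f_R0 (fun j => a j * (INR N - INR j) * (v ^ N * u ^ j - u ^ N * v ^ j)) n.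
Proof.
  unfold Gf, Phs, Pss. induction n as [|n IH].
  - simpl; ring.
  - simpl sum_f_R0. rewrite <- IH. ring.
Qed.

Lemma Gf_nonneg a N n u v : (forall i, 0 <= a i) -> (n < N)%nat -> 0 <= u <= v ->
  0 <= Gf a N n u v.
Proof.
  intros ha hn huv. rewrite Gf_eq. apply sum_nonneg_upto. intros j hj.
  apply Rmult_le_pos. apply Rmult_le_pos. apply ha.
  assert (INR j <= INR N) by (apply le_INR; lia). lra.
  replace N with (j + (N - j))%nat by lia. rewrite !pow_add.
  replace (v ^ j * v ^ (N - j) * u ^ j - u ^ j * u ^ (N - j) * v ^ j)
    with (u ^ j * v ^ j * (v ^ (N - j) - u ^ (N - j))) by ring.
  apply Rmult_le_pos. apply Rmult_le_pos; apply pow_le; lra.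
  assert (u ^ (N - j) <= v ^ (N - j)) by (apply pow_incr; lra). lra.
Qed.

Lemma finite_mono a n u v : (forall i, 0 <= a i) -> 0 <= u <= v ->
  Pss a n u * Phs a n v <= Pss a n v * Phs a n u.
Proof.
  intros ha huv. induction n as [|n IH].
  - unfold Pss, Phs; simpl; lra.
  - assert (E : Pss a (S n) v * Phs a (S n) u - Pss a (S n) u * Phs a (S n) v
       = (Pss a n v * Phs a n u - Pss a n u * Phs a n v) + a (S n) * Gf a (S n) n u v).
    { unfold Gf, Pss, Phs. rewrite !tech5. ring. }
    pose proof (Gf_nonneg a (S n) n u v ha (le_n _) huv).
    pose proof (ha (S n)).
    assert (0 <= a (S n) * Gf a (S n) n u v) by (apply Rmult_le_pos; auto). lra.
Qed.

Lemma lim_scal (s : nat -> R) (a l : R) : is_lim_seq s l -> is_lim_seq (fun n => a * s n) (a * l).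
Proof. intro h. apply (is_lim_seq_mult' (fun _ => a) s a l); [apply is_lim_seq_const|exact h]. Qed.
Lemma Phs_lim u : 0 < u -> is_lim_seq (fun n => Phs ec n u) (P0 u).
Proof.
  intro hu. eapply is_lim_seq_ext; [|apply (Qf_lim 0 u hu)].
  intro n. unfold Phs, ec. apply sum_eq. intros i _. rewrite Nat.add_0_r. field.
  apply INR_fact_neq_0.
Qed.

Lemma Pss_shift u n : Pss ec (S n) u =
  u * sum_f_R0 (fun m => u ^ m / INR (fact m) * Qf (m + 1) 0) n.
Proof.
  unfold Pss, ec. induction n as [|n IH].
  - simpl. field.
  - rewrite tech5. rewrite IH. rewrite tech5.
    rewrite Nat.add_1_r.
    replace (fact (S (S n))) with (S (S n) * fact (S n))%nat by reflexivity.
    rewrite mult_INR. simpl pow.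
    field. split. apply INR_fact_neq_0. apply not_0_INR; lia.
Qed.

Lemma Pss_lim u : 0 < u -> is_lim_seq (fun n => Pss ec (S n) u) (u * P1 u).
Proof.
  intro hu. eapply is_lim_seq_ext; [intro n; symmetry; apply Pss_shift|].
  apply lim_scal. apply (Qf_lim 1 u hu).
Qed.

Lemma P0_ge_sq u : 0 < u -> u ^ 2 <= P0 u.
Proof.
  intro hu.
  assert (H : is_lim_seq (fun n => Phs ec (S (S n)) u) (P0 u)).
  { apply (is_lim_seq_incr_1 (fun n => Phs ec (S n) u)).
    apply (is_lim_seq_incr_1 (fun n => Phs ec n u)). apply Phs_lim; auto. }
  pose proof (is_lim_seq_le (fun _ => u ^ 2) (fun n => Phs ec (S (S n)) u) (u ^ 2) (P0 u)) as K.
  apply K; [|apply is_lim_seq_const|exact H].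
  intro n. unfold Phs.
  replace (u ^ 2) with (ec 2 * u ^ 2) by (rewrite ec2; ring).
  apply (sum_ge_term (fun m => ec m * u ^ m)).
  intro i; apply Rmult_le_pos; [apply ec_nonneg| apply pow_le; lra]. lia.
Qed.

Lemma F_gt2 u : 0 < u -> 2 * P0 u < u * P1 u.
Proof.
  intro hu.
  assert (H1 : is_lim_seq (fun n => Pss ec (S n) u - 2 * Phs ec (S n) u) (u * P1 u - 2 * P0 u)).
  { apply is_lim_seq_minus'. apply Pss_lim; auto.
    apply lim_scal. apply (is_lim_seq_incr_1 (fun n => Phs ec n u)). apply Phs_lim; auto. }
  assert (H2 : is_lim_seq (fun n => Pss ec (S (n + 5)) u - 2 * Phs ec (S (n + 5)) u) (u * P1 u - 2 * P0 u)).
  { apply (is_lim_seq_incr_n (fun n => Pss ec (S n) u - 2 * Phs ec (S n) u) 5). exact H1. }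
  pose proof (is_lim_seq_le (fun _ => (INR 6 - 2) * ec 6 * u ^ 6) (fun n => Pss ec (S (n + 5)) u - 2 * Phs ec (S (n + 5)) u) ((INR 6 - 2) * ec 6 * u ^ 6) (u * P1 u - 2 * P0 u)) as K.

  assert (0 < (INR 6 - 2) * ec 6 * u ^ 6).
  { apply Rmult_lt_0_compat. apply Rmult_lt_0_compat. simpl; lra. apply ec6. apply pow_lt; lra. }
  assert ((INR 6 - 2) * ec 6 * u ^ 6 <= u * P1 u - 2 * P0 u); [|lra].
  apply K; [|apply is_lim_seq_const|exact H2].
  intro n.
  assert (E : forall N, Pss ec N u - 2 * Phs ec N u = sum_f_R0 (fun m => (INR m - 2) * ec m * u ^ m) N).
  { intro N. unfold Pss, Phs. induction N as [|N IH]; simpl sum_f_R0; [ring|]. rewrite <- IH; ring. }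
  rewrite E. apply (sum_ge_term (fun m => (INR m - 2) * ec m * u ^ m)).
  intro i. apply Rmult_le_pos. apply ec_m2. apply pow_le; lra. lia.
Qed.

Lemma F_mono u v : 0 < u <= v -> u * P1 u * P0 v <= v * P1 v * P0 u.
Proof.
  intro huv.
  assert (Hu : is_lim_seq (fun n => Pss ec (S n) u * Phs ec (S n) v) (u * P1 u * P0 v)).
  { apply is_lim_seq_mult'. apply Pss_lim; lra.
    apply (is_lim_seq_incr_1 (fun n => Phs ec n v)). apply Phs_lim; lra. }
  assert (Hv : is_lim_seq (fun n => Pss ec (S n) v * Phs ec (S n) u) (v * P1 v * P0 u)).
  { apply is_lim_seq_mult'. apply Pss_lim; lra.
    apply (is_lim_seq_incr_1 (fun n => Phs ec n u)). apply Phs_lim; lra. }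
  pose proof (is_lim_seq_le _ _ _ _ (fun n => finite_mono ec (S n) u v ec_nonneg ltac:(lra)) Hu Hv) as K.
  exact K.
Qed.

Definition fb x := x * (sinh x * cosh x + sin x * cos x) / (sinh x ^ 2 + sin x ^ 2).

Lemma exp_2x x : exp (2 * x) = exp x * exp x /\ exp (- (2 * x)) = exp (- x) * exp (- x).
Proof.
  split. replace (2 * x) with (x + x) by ring; apply exp_plus.
  replace (- (2 * x)) with (- x + - x) by ring; apply exp_plus.
Qed.

Lemma exp_mul_neg x : exp x * exp (- x) = 1.
Proof. rewrite <- exp_plus, Rplus_opp_r, exp_0. reflexivity. Qed.

Lemma dbl1 x : sinh x * cosh x + sin x * cos x = P1 (2 * x) / 2.
Proof.
  unfold P1, sinh, cosh. destruct (exp_2x x) as [e1 e2]. rewrite e1, e2, sin_2a.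
  field.
Qed.

Lemma dbl0 x : sinh x ^ 2 + sin x ^ 2 = P0 (2 * x) / 2.
Proof.
  unfold P0, sinh, cosh. destruct (exp_2x x) as [e1 e2]. rewrite e1, e2, cos_2a_sin.
  pose proof (exp_mul_neg x) as h.
  replace 1 with (exp x * exp (- x)) by exact h. field.
Qed.

Lemma sh_ge x : 0 < x -> 2 * x ^ 2 <= sinh x ^ 2 + sin x ^ 2.
Proof.
  intro hx. rewrite dbl0. pose proof (P0_ge_sq (2 * x) ltac:(lra)). nra.
Qed.

Lemma sh_pos x : 0 < x -> 0 < sinh x ^ 2 + sin x ^ 2.
Proof. intro hx. pose proof (sh_ge x hx). nra. Qed.

Lemma fb_eq x : 0 < x -> fb x = (2 * x) * P1 (2 * x) / (2 * P0 (2 * x)).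
Proof.
  intro hx. unfold fb. rewrite dbl1, dbl0. pose proof (P0_ge_sq (2 * x) ltac:(lra)).
  field. nra.
Qed.

Lemma fb_gt1 x : 0 < x -> 1 < fb x.
Proof.
  intro hx. rewrite fb_eq; auto. pose proof (P0_ge_sq (2 * x) ltac:(lra)).
  pose proof (F_gt2 (2 * x) ltac:(lra)).
  apply Rlt_div_r; nra.
Qed.

Lemma fb_mono x y : 0 < x <= y -> fb x <= fb y.
Proof.
  intro h. rewrite !fb_eq; try lra.
  pose proof (P0_ge_sq (2 * x) ltac:(lra)). pose proof (P0_ge_sq (2 * y) ltac:(lra)).
  pose proof (F_mono (2 * x) (2 * y) ltac:(lra)).
  assert (0 < P0 (2 * x)) by nra. assert (0 < P0 (2 * y)) by nra.
  unfold Rdiv. apply Rmult_le_reg_r with (2 * P0 (2 * x) * (2 * P0 (2 * y))).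
  nra.
  replace (2 * x * P1 (2 * x) * / (2 * P0 (2 * x)) * (2 * P0 (2 * x) * (2 * P0 (2 * y))))
    with (2 * (2 * x * P1 (2 * x) * P0 (2 * y))) by (field; lra).
  replace (2 * y * P1 (2 * y) * / (2 * P0 (2 * y)) * (2 * P0 (2 * x) * (2 * P0 (2 * y))))
    with (2 * (2 * y * P1 (2 * y) * P0 (2 * x))) by (field; lra).
  lra.
Qed.

Definition Cn2 (z : Cx) := fst z * fst z + snd z * snd z.
Definition Cab (z : Cx) := sqrt (Cn2 z).

Lemma Cn2_nonneg z : 0 <= Cn2 z.
Proof. unfold Cn2; nra. Qed.
Lemma Cab_nonneg z : 0 <= Cab z.
Proof. apply sqrt_pos. Qed.
Lemma Cn2_mul z w : Cn2 (Cmul z w) = Cn2 z * Cn2 w.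
Proof. unfold Cn2, Cmul; simpl; ring. Qed.
Lemma Cab_mul z w : Cab (Cmul z w) = Cab z * Cab w.
Proof. unfold Cab; rewrite Cn2_mul; apply sqrt_mult; apply Cn2_nonneg. Qed.
Lemma Cab_scal a z : Cab (Cscal a z) = Rabs a * Cab z.
Proof.
  unfold Cab. replace (Cn2 (Cscal a z)) with (Rsqr a * Cn2 z) by (unfold Cn2, Cscal, Rsqr; simpl; ring).
  rewrite sqrt_mult. rewrite sqrt_Rsqr_abs. reflexivity. apply Rle_0_sqr. apply Cn2_nonneg.
Qed.
Lemma Cab_exp z : Cab (Cexp z) = exp (fst z).
Proof.
  unfold Cab, Cn2, Cexp; simpl.
  replace (exp (fst z) * cos (snd z) * (exp (fst z) * cos (snd z)) +
    exp (fst z) * sin (snd z) * (exp (fst z) * sin (snd z))) with (Rsqr (exp (fst z))).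
  rewrite sqrt_Rsqr; [reflexivity| left; apply exp_pos].
  unfold Rsqr. pose proof (sin2_cos2 (snd z)) as h. unfold Rsqr in h. nra.
Qed.
Lemma Rabs_fst_le z : Rabs (fst z) <= Cab z.
Proof.
  unfold Cab, Cn2. rewrite <- sqrt_Rsqr_abs. apply sqrt_le_1. apply Rle_0_sqr.
  nra. unfold Rsqr; nra.
Qed.
Lemma Cab_pow z n : Cab (Cpow z n) = Cab z ^ n.
Proof.
  induction n as [|n IH]; simpl.
  - unfold Cab, Cn2; simpl. replace (1 * 1 + 0 * 0) with 1 by ring. apply sqrt_1.
  - rewrite Cab_mul, IH; reflexivity.
Qed.
Lemma Cpow_real y n : Cpow (y, 0) n = (y ^ n, 0).
Proof.
  induction n as [|n IH]; simpl; auto. rewrite IH. unfold Cmul; simpl. f_equal; ring.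
Qed.

Lemma Csqrt_j t : 0 <= t -> Csqrt (Cscal t Cj) = (sqrt (t / 2), sqrt (t / 2)).
Proof.
  intro ht. unfold Csqrt, Cscal, Cj; simpl.
  replace (t * 0 * (t * 0) + t * 1 * (t * 1)) with (t * t) by ring.
  rewrite sqrt_square; auto.
  destruct (Rle_dec 0 (t * 1)) as [h|h]; [|exfalso; lra].
  f_equal; f_equal; field.
Qed.

Lemma Csinh_bb b : Csinh (b, b) = (sinh b * cos b, cosh b * sin b).
Proof.
  unfold Csinh, Cscal, Cadd, Cexp, Cneg; simpl. rewrite cos_neg, sin_neg.
  unfold sinh, cosh. f_equal; field.
Qed.
Lemma Ccosh_bb b : Ccosh (b, b) = (cosh b * cos b, sinh b * sin b).
Proof.
  unfold Ccosh, Cscal, Cadd, Cexp, Cneg; simpl. rewrite cos_neg, sin_neg.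
  unfold sinh, cosh. f_equal; field.
Qed.

Lemma cosh_sinh_sq x : cosh x ^ 2 = 1 + sinh x ^ 2.
Proof.
  unfold cosh, sinh. pose proof (exp_mul_neg x) as h.
  replace 1 with (exp x * exp (- x)) at 1 by exact h. field.
Qed.

Lemma sinh_den b : sinh b * cos b * (sinh b * cos b) + cosh b * sin b * (cosh b * sin b)
  = sinh b ^ 2 + sin b ^ 2.
Proof.
  pose proof (cosh_sinh_sq b). pose proof (sin2_cos2 b) as h. unfold Rsqr in h.
  replace (cosh b * sin b * (cosh b * sin b)) with (cosh b ^ 2 * sin b ^ 2) by ring.
  rewrite H. nra.
Qed.

Lemma sinh_posx x : 0 < x -> 0 < sinh x.
Proof. intro h. rewrite <- sinh_0. apply sinh_lt; auto. Qed.

Lemma re_coth k b : 0 < b ->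
  fst (Cmul (k * b, k * b) (Ccoth (b, b))) = k * fb b.
Proof.
  intro hb. pose proof (sh_pos b hb) as hd.
  unfold Ccoth, Cdiv. rewrite Csinh_bb, Ccosh_bb. unfold Cmul, Cinv; simpl.
  rewrite sinh_den. unfold fb.
  pose proof (cosh_sinh_sq b). pose proof (sin2_cos2 b) as h. unfold Rsqr in h.
  transitivity (k * b * (sinh b * cosh b * (sin b * sin b + cos b * cos b)
     + sin b * cos b * (cosh b ^ 2 - sinh b ^ 2)) / (sinh b ^ 2 + sin b ^ 2)).
  { field; lra. }
  rewrite h, H. field; lra.
Qed.

Lemma Cn2_inv z : 0 < Cn2 z -> Cn2 (Cinv z) = / Cn2 z.
Proof. unfold Cn2, Cinv; simpl; intro h. field. unfold Cn2 in h; lra. Qed.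

Lemma Cn2_b k b : 0 < b ->
  Cn2 (Cmul (k * b, k * b) (Cinv (Csinh (b, b)))) = 2 * k ^ 2 * b ^ 2 / (sinh b ^ 2 + sin b ^ 2).
Proof.
  intro hb. pose proof (sh_pos b hb) as hd.
  rewrite Cn2_mul, Cn2_inv; rewrite Csinh_bb; unfold Cn2; simpl fst; simpl snd;
  rewrite ?sinh_den. field; lra. lra.
Qed.

Lemma sqrt_half_mul t s : 0 <= t -> 0 < s -> sqrt (t * s ^ 2 / 2) = sqrt (t / 2) * s.
Proof.
  intros ht hs. replace (t * s ^ 2 / 2) with (t / 2 * Rsqr s) by (unfold Rsqr; field).
  rewrite sqrt_mult. rewrite sqrt_Rsqr; lra. lra. apply Rle_0_sqr.
Qed.

Section AB.
Variables gamma sigma L : R.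
Hypotheses (hg : 0 < gamma) (hs : 0 < sigma) (hL : 0 < L).

Lemma am_form m : a_m gamma sigma L m =
  Cmul (/ (sigma ^ 2 * L) * beta gamma sigma L m, / (sigma ^ 2 * L) * beta gamma sigma L m)
       (Ccoth (beta gamma sigma L m, beta gamma sigma L m)).
Proof.
  pose proof (pos_INR m).
  unfold a_m. rewrite !Csqrt_j; try (apply Rmult_le_pos; try apply Rmult_le_pos; try nra).
  rewrite sqrt_half_mul; try nra.
  unfold Cscal, beta; simpl fst; simpl snd. set (q := sqrt (INR m * gamma / 2)).
  replace (L * (q * sigma)) with (q * sigma * L) by ring.
  replace (/ sigma * q) with (/ (sigma ^ 2 * L) * (q * sigma * L)) by (field; lra).
  reflexivity.
Qed.

Lemma bm_form m : b_m gamma sigma L m =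
  Cmul (/ (sigma ^ 2 * L) * beta gamma sigma L m, / (sigma ^ 2 * L) * beta gamma sigma L m)
       (Cinv (Csinh (beta gamma sigma L m, beta gamma sigma L m))).
Proof.
  pose proof (pos_INR m).
  unfold b_m. rewrite !Csqrt_j; try (apply Rmult_le_pos; try apply Rmult_le_pos; try nra).
  rewrite sqrt_half_mul; try nra.
  unfold Cscal, beta; simpl fst; simpl snd. set (q := sqrt (INR m * gamma / 2)).
  replace (L * (q * sigma)) with (q * sigma * L) by ring.
  replace (/ sigma * q) with (/ (sigma ^ 2 * L) * (q * sigma * L)) by (field; lra).
  reflexivity.
Qed.
End AB.

Lemma exs_le (a b : nat -> R) : (forall n, Rabs (a n) <= b n) -> ex_series b -> ex_series a.
Proof. intros h hb. apply (ex_series_le a b); auto. Qed.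
Lemma exs_scal (c : R) (a : nat -> R) : ex_series a -> ex_series (fun n => c * a n).
Proof. intro h. apply (ex_series_scal_l c a h). Qed.
Lemma exs_plus (a b : nat -> R) : ex_series a -> ex_series b -> ex_series (fun n => a n + b n).
Proof. intros h1 h2. apply (ex_series_plus a b h1 h2). Qed.
Lemma Series_zero : Series (fun _ => 0) = 0.
Proof.
  rewrite (Series_ext _ (fun n => 0 * 1)). rewrite Series_scal_l. ring. intros; ring.
Qed.
Lemma Series_nonneg (a : nat -> R) : (forall n, 0 <= a n) -> ex_series a -> 0 <= Series a.
Proof.
  intros h ha. rewrite <- Series_zero. apply Series_le; auto. intro n; split; auto; lra.
Qed.
Lemma Series_mono (a b : nat -> R) : ex_series a -> ex_series b -> (forall n, a n <= b n) ->
  Series a <= Series b.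
Proof.
  intros ha hb h. assert (0 <= Series (fun n => b n - a n)).
  { apply Series_nonneg. intro n; specialize (h n); lra.
    apply (ex_series_minus b a hb ha). }
  rewrite Series_minus in H; auto. lra.
Qed.
Lemma Series_ge_first (a : nat -> R) : (forall n, 0 <= a n) -> ex_series a -> a 0%nat <= Series a.
Proof.
  intros h ha. rewrite Series_incr_1; auto.
  pose proof (Series_nonneg (fun k => a (S k)) (fun k => h (S k))
     (proj1 (ex_series_incr_1 a) ha)). lra.
Qed.

Lemma Rseries_is (f : nat -> R) l : infinite_sum f l -> Rseries f = l.
Proof.
  intro h. unfold Rseries.
  assert (H : infinite_sum f (epsilon (inhabits 0) (fun l => infinite_sum f l))).
  { apply epsilon_spec. exists l; auto. }
  apply is_series_Reals in h. apply is_series_Reals in H.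
  apply is_series_unique in h. apply is_series_unique in H. congruence.
Qed.
Lemma Rseries_Series (f : nat -> R) : ex_series f -> Rseries f = Series f.
Proof.
  intro h. apply Rseries_is. apply is_series_Reals. apply Series_correct; auto.
Qed.

Definition cc (p : R) (k : nat) : R := p ^ k / INR (fact k).

Lemma cc_nonneg p k : 0 <= p -> 0 <= cc p k.
Proof. intro h. unfold cc. apply Rcomplements.Rdiv_le_0_compat. apply pow_le; auto. apply INR_fact_lt_0. Qed.

Lemma exp_is_series p : is_series (cc p) (exp p).
Proof.
  apply is_series_Reals. unfold exp. destruct (exist_exp p) as [l hl]. simpl.
  unfold exp_in in hl. intros eps he. destruct (hl eps he) as [N HN]. exists N.
  intros n hn. specialize (HN n hn). unfold cc.
  rewrite (sum_eq _ (fun i => / INR (fact i) * p ^ i)); auto. intros; unfold Rdiv; ring.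
Qed.
Lemma ex_cc p : ex_series (cc p).
Proof. eexists; apply exp_is_series. Qed.
Lemma Series_cc p : Series (cc p) = exp p.
Proof. apply is_series_unique, exp_is_series. Qed.

Lemma cc_le_exp p k : 0 <= p -> cc p k <= exp p.
Proof.
  intro hp. eapply Rle_trans; [|apply (exp_ge_taylor p k hp)].
  apply (sum_ge_term (fun k => p ^ k / INR (fact k))).
  intro i; apply (cc_nonneg p i hp). lia.
Qed.

Lemma cc_0 p : cc p 0 = 1.
Proof. unfold cc; simpl; field. Qed.

Lemma cc_mono p q k : 0 <= p <= q -> cc p k <= cc q k.
Proof.
  intro h. unfold cc, Rdiv. apply Rmult_le_compat_r.
  left; apply Rinv_0_lt_compat, INR_fact_lt_0. apply pow_incr; auto.
Qed.

Definition I0s (p : R) := Series (fun k => cc p k ^ 2).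
Definition Sm (p : R) (m : nat) := Series (fun k => cc p k * cc p (k + m)).

Lemma ex_I0 p : 0 <= p -> ex_series (fun k => cc p k ^ 2).
Proof.
  intro hp. apply (exs_le _ (fun k => exp p * cc p k)).
  intro n. rewrite Rabs_right. pose proof (cc_le_exp p n hp). pose proof (cc_nonneg p n hp). nra.
  apply Rle_ge, pow2_ge_0.
  apply exs_scal, ex_cc.
Qed.
Lemma ex_Sm p m : 0 <= p -> ex_series (fun k => cc p k * cc p (k + m)).
Proof.
  intro hp. apply (exs_le _ (fun k => exp p * cc p k)).
  intro n. pose proof (cc_le_exp p (n + m) hp). pose proof (cc_nonneg p n hp).
  pose proof (cc_nonneg p (n + m) hp).
  rewrite Rabs_right by nra. nra.
  apply exs_scal, ex_cc.
Qed.

Lemma I0_le_exp p : 0 <= p -> I0s p <= exp (2 * p).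
Proof.
  intro hp. unfold I0s. replace (exp (2 * p)) with (exp p * Series (cc p)).
  rewrite <- Series_scal_l. apply Series_le.
  intro n. pose proof (cc_le_exp p n hp). pose proof (cc_nonneg p n hp). split; nra.
  apply exs_scal, ex_cc.
  rewrite Series_cc. rewrite <- exp_plus. f_equal; ring.
Qed.

Lemma I0_ge1 p : 0 <= p -> 1 <= I0s p.
Proof.
  intro hp. unfold I0s. pose proof (Series_ge_first (fun k => cc p k ^ 2)) as h.
  cbv beta in h. rewrite cc_0 in h. replace 1 with (1 ^ 2) by ring. apply h. intro; apply pow2_ge_0.
  apply ex_I0; auto.
Qed.

Lemma I0_mono p q : 0 <= p <= q -> I0s p <= I0s q.
Proof.
  intro h. unfold I0s. apply Series_le. intro n. pose proof (cc_mono p q n h).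
  pose proof (cc_nonneg p n ltac:(lra)). split; nra. apply ex_I0; lra.
Qed.

Lemma Sm_le p m : 0 <= p -> (1 <= m)%nat -> Sm p m <= I0s p - / 2.
Proof.
  intros hp hm. unfold Sm, I0s.
  assert (E : Series (fun k => cc p k ^ 2) =
     sum_f_R0 (fun k => cc p k ^ 2) (pred m) + Series (fun k => cc p (m + k) ^ 2)).
  { apply (Series_incr_n (fun k => cc p k ^ 2) m). lia. apply ex_I0; auto. }
  assert (h1 : 1 <= sum_f_R0 (fun k => cc p k ^ 2) (pred m)).
  { replace 1 with ((fun k => cc p k ^ 2) 0%nat) by (simpl; rewrite cc_0; ring).
    apply (sum_ge_term (fun k => cc p k ^ 2)). intro; apply pow2_ge_0. lia. }
  assert (ex2 : ex_series (fun k => cc p (m + k) ^ 2)).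
  { apply (ex_series_incr_n (fun k => cc p k ^ 2) m). apply ex_I0; auto. }
  assert (h2 : 2 * Series (fun k => cc p k * cc p (k + m)) <=
      Series (fun k => cc p k ^ 2) + Series (fun k => cc p (m + k) ^ 2)).
  { rewrite <- Series_plus; auto. rewrite <- Series_scal_l. apply Series_mono.
    apply exs_scal, ex_Sm; auto. apply exs_plus; auto. apply ex_I0; auto.
    intro n. rewrite Nat.add_comm. pose proof (pow2_ge_0 (cc p n - cc p (m + n))). nra.
    apply ex_I0; auto. }
  lra.
Qed.

Lemma Rabs_snd_le z : Rabs (snd z) <= Cab z.
Proof.
  unfold Cab, Cn2. rewrite <- sqrt_Rsqr_abs. apply sqrt_le_1. apply Rle_0_sqr.
  nra. unfold Rsqr; nra.
Qed.

Lemma Cab_sq z : Cab z * Cab z = Cn2 z.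
Proof. unfold Cab. apply sqrt_sqrt, Cn2_nonneg. Qed.

Lemma cauchy_schwarz z w : fst z * fst w + snd z * snd w <= Cab z * Cab w.
Proof.
  pose proof (Cab_sq z) as hz. pose proof (Cab_sq w) as hw.
  pose proof (Rmult_le_pos _ _ (Cab_nonneg z) (Cab_nonneg w)) as hpq.
  pose proof (Cab_nonneg z) as hp0. pose proof (Cab_nonneg w) as hq0.
  unfold Cn2 in hz, hw.
  set (x := fst z) in *. set (y := snd z) in *. set (a := fst w) in *. set (b := snd w) in *.
  set (p := Cab z) in *. set (q := Cab w) in *.
  destruct (Rle_dec (x * a + y * b) 0) as [h|h]. lra.
  assert ((x * a + y * b) ^ 2 <= (p * q) ^ 2).
  { replace ((p * q) ^ 2) with ((p * p) * (q * q)) by ring. rewrite hz, hw.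
    pose proof (pow2_ge_0 (x * b - y * a)). nra. }
  nra.
Qed.

Definition Tk (m : nat) (z : Cx) (k : nat) : Cx :=
  Cscal (/ (INR (fact k) * INR (fact (k + m)))) (Cpow (Cscal (/ 2) z) (2 * k + m)).

Lemma Cab_Tk m z k : Cab (Tk m z k) = cc (Cab z / 2) k * cc (Cab z / 2) (k + m).
Proof.
  unfold Tk. rewrite Cab_scal, Cab_pow, Cab_scal.
  pose proof (INR_fact_lt_0 k). pose proof (INR_fact_lt_0 (k + m)).
  rewrite Rabs_right. rewrite (Rabs_right (/ 2)) by lra.
  replace (2 * k + m)%nat with (k + (k + m))%nat by lia. rewrite pow_add.
  unfold cc. replace (/ 2 * Cab z) with (Cab z / 2) by field. field. lra.
  apply Rle_ge. left. apply Rinv_0_lt_compat. nra.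
Qed.

Lemma BesselI_abs m z : Cab (BesselI m z) <= Sm (Cab z / 2) m.
Proof.
  assert (hp : 0 <= Cab z / 2) by (pose proof (Cab_nonneg z); lra).
  assert (e1 : ex_series (fun k => fst (Tk m z k))).
  { apply (exs_le _ (fun k => cc (Cab z / 2) k * cc (Cab z / 2) (k + m))).
    intro n. rewrite <- Cab_Tk. apply Rabs_fst_le. apply ex_Sm; auto. }
  assert (e2 : ex_series (fun k => snd (Tk m z k))).
  { apply (exs_le _ (fun k => cc (Cab z / 2) k * cc (Cab z / 2) (k + m))).
    intro n. rewrite <- Cab_Tk. apply Rabs_snd_le. apply ex_Sm; auto. }
  assert (EB : BesselI m z = (Series (fun k => fst (Tk m z k)), Series (fun k => snd (Tk m z k)))).
  { unfold BesselI, Cseries. rewrite !Rseries_Series; auto. }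
  rewrite EB. set (X := Series (fun k => fst (Tk m z k))). set (Y := Series (fun k => snd (Tk m z k))).
  pose proof (Cab_sq (X, Y)) as hc. unfold Cn2 in hc; simpl fst in hc; simpl snd in hc.
  assert (hS : 0 <= Sm (Cab z / 2) m).
  { apply Series_nonneg. intro; apply Rmult_le_pos; apply cc_nonneg; auto. apply ex_Sm; auto. }
  assert (key : X * X + Y * Y <= Cab (X, Y) * Sm (Cab z / 2) m).
  { replace (X * X + Y * Y) with (Series (fun k => X * fst (Tk m z k) + Y * snd (Tk m z k))).
    unfold Sm. rewrite <- Series_scal_l. apply Series_mono.
    apply exs_plus; apply exs_scal; auto. apply exs_scal, ex_Sm; auto.
    intro n. rewrite <- Cab_Tk. apply (cauchy_schwarz (X, Y) (Tk m z n)).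
    rewrite Series_plus by (apply exs_scal; auto). rewrite !Series_scal_l. reflexivity. }
  pose proof (Cab_nonneg (X, Y)). nra.
Qed.

Lemma BesselI_R0 x : 0 <= x -> BesselI_R 0 x = I0s (x / 2).
Proof.
  intro hx. unfold BesselI_R, BesselI, Cseries, Creal. simpl fst.
  unfold I0s. rewrite <- Rseries_Series by (apply ex_I0; lra).
  f_equal. apply functional_extensionality. intro k.
  replace (Cscal (/ 2) (x, 0)) with (x / 2, 0) by (unfold Cscal; simpl; f_equal; field).
  rewrite Cpow_real. simpl fst. rewrite !Nat.add_0_r. unfold cc. rewrite pow_add.
  pose proof (INR_fact_lt_0 k). field. lra.
Qed.

Lemma sqrt_le_of_sq x y : 0 <= y -> x <= y ^ 2 -> sqrt x <= y.
Proof.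
  intros hy h. destruct (Rle_lt_dec x 0) as [h0|h0].
  rewrite sqrt_neg_0; auto.
  rewrite <- (sqrt_pow2 y hy). apply sqrt_le_1; lra.
Qed.

Lemma exp_mono x y : x <= y -> exp x <= exp y.
Proof. intro h. destruct (Rle_lt_or_eq_dec _ _ h) as [h1|h1]. left; apply exp_increasing; auto. subst; lra. Qed.

Lemma Qf0_nonneg m : 0 <= Qf m 0.
Proof. destruct (Qf0_vals m) as [h|h]; rewrite h; lra. Qed.

Lemma Qf_ge_term j x k : 0 < x -> x ^ k / INR (fact k) * Qf (k + j) 0 <= Qf j x.
Proof.
  intro hx.
  set (s := fun n => sum_f_R0 (fun m => x ^ m / INR (fact m) * Qf (m + j) 0) n).
  assert (H : is_lim_seq (fun n => s (n + k)%nat) (Qf j x)).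
  { apply (proj1 (is_lim_seq_incr_n s k _)). apply Qf_lim; auto. }
  apply (is_lim_seq_le (fun _ => x ^ k / INR (fact k) * Qf (k + j) 0) (fun n => s (n + k)%nat)
     (x ^ k / INR (fact k) * Qf (k + j) 0) (Qf j x)); [|apply is_lim_seq_const|exact H].
  intro n. unfold s. apply (sum_ge_term (fun m => x ^ m / INR (fact m) * Qf (m + j) 0)).
  intro i. apply Rmult_le_pos. apply Rcomplements.Rdiv_le_0_compat. apply pow_le; lra.
  apply INR_fact_lt_0. apply Qf0_nonneg. lia.
Qed.

Lemma sinh_ge5 x : 0 < x -> x ^ 5 / INR (fact 5) <= sinh x.
Proof.
  intro hx. pose proof (Qf_ge_term 1 x 5 hx) as h1. pose proof (Qf_ge_term 3 x 0 hx) as h3.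
  simpl Qf in h1, h3. unfold P1, P2 in h1. unfold P3 in h3.
  rewrite cosh_0, cos_0 in h1. rewrite sinh_0, sin_0 in h3. lra.
Qed.

Lemma telescope : ex_series (fun n => / (INR (S n) * INR (S (S n)))).
Proof.
  apply ex_series_Reals_1. exists 1.
  assert (E : forall N, sum_f_R0 (fun n => / (INR (S n) * INR (S (S n)))) N = 1 - / INR (S (S N))).
  { induction N as [|N IH]. simpl. field. rewrite tech5, IH.
    rewrite !S_INR. pose proof (pos_INR N). field. lra. }
  apply is_lim_seq_Reals.
  assert (h : is_lim_seq (fun n => / INR n) 0).
  { replace (Finite 0) with (Rbar_inv p_infty) by reflexivity.
    apply is_lim_seq_inv. apply is_lim_seq_INR. discriminate. }
  apply (proj1 (is_lim_seq_incr_n _ 2 _)) in h.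
  assert (h2 : is_lim_seq (fun n => 1 - / INR (n + 2)) (1 - 0)).
  { apply is_lim_seq_minus'. apply is_lim_seq_const. exact h. }
  rewrite Rminus_0_r in h2. eapply is_lim_seq_ext; [|exact h2].
  intro n. rewrite E. replace (n + 2)%nat with (S (S n)) by lia. reflexivity.
Qed.

Section Main.
Variables gamma sigma L : R.
Hypotheses (hg : 0 < gamma) (hs : 0 < sigma) (hL : 0 < L).

Definition kap := / (sigma ^ 2 * L).
Lemma kap_pos : 0 < kap.
Proof. unfold kap. apply Rinv_0_lt_compat. apply Rmult_lt_0_compat; [apply pow_lt|]; lra. Qed.

Lemma beta_pos m : (1 <= m)%nat -> 0 < beta gamma sigma L m.
Proof.
  intro hm. unfold beta. apply Rmult_lt_0_compat; auto. apply Rmult_lt_0_compat; auto.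
  apply sqrt_lt_R0. assert (1 <= INR m) by (apply (le_INR 1); auto). nra.
Qed.

Lemma beta_ge1 m : (1 <= m)%nat -> beta gamma sigma L 1 <= beta gamma sigma L m.
Proof.
  intro hm. unfold beta. apply Rmult_le_compat_r; [lra|]. apply Rmult_le_compat_r; [lra|].
  apply sqrt_le_1_alt. assert (1 <= INR m) by (apply (le_INR 1); auto). simpl INR. nra.
Qed.

Lemma beta_sq m : beta gamma sigma L m ^ 2 = INR m * (gamma / 2 * sigma ^ 2 * L ^ 2).
Proof.
  unfold beta. pose proof (pos_INR m).
  replace ((sqrt (INR m * gamma / 2) * sigma * L) ^ 2) with
    ((sqrt (INR m * gamma / 2) * sqrt (INR m * gamma / 2)) * sigma ^ 2 * L ^ 2) by ring.
  rewrite sqrt_sqrt. field. nra.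
Qed.

Lemma Re_am m : (1 <= m)%nat -> fst (a_m gamma sigma L m) = kap * fb (beta gamma sigma L m).
Proof.
  intro hm. rewrite am_form; auto. apply re_coth. apply beta_pos; auto.
Qed.

Lemma Re_a1_gt : kap < fst (a_m gamma sigma L 1).
Proof.
  rewrite Re_am; auto. pose proof (fb_gt1 _ (beta_pos 1 (le_n _))). pose proof kap_pos. nra.
Qed.

Lemma Re_am_ge m : (1 <= m)%nat -> fst (a_m gamma sigma L 1) <= fst (a_m gamma sigma L m).
Proof.
  intro hm. rewrite !Re_am; auto. apply Rmult_le_compat_l. left; apply kap_pos.
  apply fb_mono. split. apply beta_pos; auto. apply beta_ge1; auto.
Qed.

Lemma Re_am_gt m : (1 <= m)%nat -> kap < fst (a_m gamma sigma L m).
Proof. intro hm. pose proof Re_a1_gt. pose proof (Re_am_ge m hm). lra. Qed.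

Lemma Cab_bm m : (1 <= m)%nat -> Cab (b_m gamma sigma L m) =
  sqrt (2 * kap ^ 2 * beta gamma sigma L m ^ 2 /
     (sinh (beta gamma sigma L m) ^ 2 + sin (beta gamma sigma L m) ^ 2)).
Proof.
  intro hm. unfold Cab. rewrite bm_form; auto. rewrite Cn2_b. reflexivity. apply beta_pos; auto.
Qed.

Lemma Cab_bm_le_kap m : (1 <= m)%nat -> Cab (b_m gamma sigma L m) <= kap.
Proof.
  intro hm. rewrite Cab_bm; auto. apply sqrt_le_of_sq. left; apply kap_pos.
  set (b := beta gamma sigma L m). pose proof (beta_pos m hm). pose proof (sh_ge b H).
  pose proof (sh_pos b H). apply Rcomplements.Rle_div_l; auto.
  pose proof (pow2_ge_0 kap). nra.
Qed.

Definition bt n := bterm gamma sigma L n.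

Lemma bt_pos n : 0 < bt n.
Proof.
  unfold bt, bterm. pose proof (beta_pos (S n) ltac:(lia)).
  apply Rdiv_lt_0_compat; auto. apply sinh_posx; auto.
Qed.

Lemma Cab_bm_le_bt n : Cab (b_m gamma sigma L (S n)) <= sqrt 2 * kap * bt n.
Proof.
  rewrite Cab_bm; [|lia]. unfold bt, bterm. set (b := beta gamma sigma L (S n)).
  pose proof (beta_pos (S n) ltac:(lia)) as hb. fold b in hb.
  pose proof (sinh_posx b hb). pose proof kap_pos.
  apply sqrt_le_of_sq.
  apply Rmult_le_pos. apply Rmult_le_pos. apply sqrt_pos. lra. left; apply Rdiv_lt_0_compat; auto.
  replace ((sqrt 2 * kap * (b / sinh b)) ^ 2) with
    ((sqrt 2 * sqrt 2) * kap ^ 2 * b ^ 2 / sinh b ^ 2) by (field; lra).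
  rewrite sqrt_sqrt by lra.
  pose proof (sh_pos b hb). pose proof (pow2_ge_0 (sin b)).
  unfold Rdiv. apply Rmult_le_compat_l. pose proof (pow2_ge_0 kap); pose proof (pow2_ge_0 b). nra.
  apply Rinv_le_contravar. apply pow_lt; auto. lra.
Qed.

Lemma ex_bt : ex_series bt.
Proof.
  set (g := gamma / 2 * sigma ^ 2 * L ^ 2).
  assert (hgp : 0 < g) by (unfold g; apply Rmult_lt_0_compat; [apply Rmult_lt_0_compat|]; try apply pow_lt; lra).
  apply (exs_le _ (fun n => (2 * INR (fact 5) / g ^ 2) * / (INR (S n) * INR (S (S n))))).
  2:{ apply exs_scal, telescope. }
  intro n. rewrite Rabs_right by (left; apply bt_pos).
  unfold bt, bterm. set (b := beta gamma sigma L (S n)).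
  pose proof (beta_pos (S n) ltac:(lia)) as hb. fold b in hb.
  pose proof (sinh_ge5 b hb). pose proof (INR_fact_lt_0 5).
  assert (hb2 : b ^ 2 = INR (S n) * g) by (unfold b; rewrite beta_sq; reflexivity).
  assert (h5 : 0 < b ^ 5 / INR (fact 5)) by (apply Rdiv_lt_0_compat; auto; apply pow_lt; auto).
  apply Rle_trans with (b / (b ^ 5 / INR (fact 5))).
  { unfold Rdiv at 1 2. apply Rmult_le_compat_l. lra. apply Rinv_le_contravar; auto. }
  replace (b / (b ^ 5 / INR (fact 5))) with (INR (fact 5) / (b ^ 2) ^ 2) by (field; lra).
  rewrite hb2. rewrite (S_INR (S n)). set (x := INR (S n)).
  assert (hx : 1 <= x) by (unfold x; apply (le_INR 1); lia).
  set (F5 := INR (fact 5)) in *.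
  replace (F5 / (x * g) ^ 2) with (F5 / g ^ 2 * / (x * x)) by (field; nra).
  replace (2 * F5 / g ^ 2 * / (x * (x + 1))) with (F5 / g ^ 2 * / (x * (x + 1) / 2)) by (field; nra).
  apply Rmult_le_compat_l. apply Rcomplements.Rdiv_le_0_compat. lra. apply pow_lt; lra.
  apply Rinv_le_contravar. nra. nra.
Qed.

Lemma Cm_bound m r r0 : (1 <= m)%nat -> 0 <= r -> 0 <= r0 ->
  Cab (Cm gamma sigma L m r r0) <= r * Cab (b_m gamma sigma L m) *
    exp (- ((r ^ 2 + r0 ^ 2) * fst (a_m gamma sigma L m))) * (I0s (kap * r * r0) - / 2).
Proof.
  intros hm hr hr0. unfold Cm. rewrite !Cab_mul, Cab_scal, Cab_exp.
  rewrite Rabs_right by lra. rewrite <- Rmult_assoc.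
  change (fst (Cneg (Cscal (r ^ 2 + r0 ^ 2) (a_m gamma sigma L m)))) with
    (- ((r ^ 2 + r0 ^ 2) * fst (a_m gamma sigma L m))).
  apply Rmult_le_compat_l.
  { apply Rmult_le_pos. apply Rmult_le_pos; auto. apply Cab_nonneg. left; apply exp_pos. }
  set (b := b_m gamma sigma L m).
  pose proof (Cab_bm_le_kap m hm) as hbk. fold b in hbk.
  assert (hp : 0 <= Cab (Cscal (2 * r0 * r) b) / 2).
  { pose proof (Cab_nonneg (Cscal (2 * r0 * r) b)); lra. }
  eapply Rle_trans. apply BesselI_abs.
  eapply Rle_trans. apply Sm_le; auto.
  apply Rplus_le_compat_r. apply I0_mono. split; auto.
  rewrite Cab_scal. rewrite Rabs_right by (apply Rle_ge; repeat apply Rmult_le_pos; lra).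
  pose proof (Cab_nonneg b). pose proof (Rmult_le_pos _ _ hr0 hr). nra.
Qed.

Definition tn r phi r0 phi0 (n : nat) := fst (Cmul (Cm gamma sigma L (S n) r r0)
   (Cexp (0, INR (S n) * (phi - phi0 - gamma * r0 ^ 2 * L)))).

Lemma pdens_eq r phi r0 phi0 : pdens gamma sigma L r phi r0 phi0 =
  / (2 * PI) * pR gamma sigma L r r0 + / PI * Rseries (tn r phi r0 phi0).
Proof. reflexivity. Qed.

Lemma tn_bound r phi r0 phi0 e1 n : 0 <= r -> 0 <= r0 ->
  (forall m, (1 <= m)%nat -> exp (- ((r ^ 2 + r0 ^ 2) * fst (a_m gamma sigma L m))) <= e1) ->
  Rabs (tn r phi r0 phi0 n) <= (r * sqrt 2 * kap * e1 * (I0s (kap * r * r0) - / 2)) * bt n.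
Proof.
  intros hr hr0 he. unfold tn. eapply Rle_trans. apply Rabs_fst_le.
  rewrite Cab_mul, Cab_exp. simpl fst. rewrite exp_0, Rmult_1_r.
  eapply Rle_trans. apply Cm_bound; auto; lia.
  pose proof (Cab_bm_le_bt n). pose proof (he (S n) ltac:(lia)).
  pose proof (I0_ge1 (kap * r * r0)) as hJ.
  assert (0 <= kap * r * r0) by (pose proof kap_pos; repeat apply Rmult_le_pos; lra).
  specialize (hJ H1).
  pose proof (Cab_nonneg (b_m gamma sigma L (S n))).
  pose proof (exp_pos (- ((r ^ 2 + r0 ^ 2) * fst (a_m gamma sigma L (S n))))).
  replace (r * sqrt 2 * kap * e1 * (I0s (kap * r * r0) - / 2) * bt n) with
    (r * (sqrt 2 * kap * bt n) * e1 * (I0s (kap * r * r0) - / 2)) by ring.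
  apply Rmult_le_compat_r. lra.
  apply Rmult_le_compat; try lra.
  apply Rmult_le_pos; lra.
  apply Rmult_le_compat_l; lra.
Qed.

Lemma ex_tn r phi r0 phi0 e1 : 0 <= r -> 0 <= r0 ->
  (forall m, (1 <= m)%nat -> exp (- ((r ^ 2 + r0 ^ 2) * fst (a_m gamma sigma L m))) <= e1) ->
  ex_series (tn r phi r0 phi0).
Proof.
  intros hr hr0 he. eapply exs_le. intro n. apply (tn_bound r phi r0 phi0 e1 n hr hr0 he).
  apply exs_scal, ex_bt.
Qed.

Lemma Series_tn_le r phi r0 phi0 e1 : 0 <= r -> 0 <= r0 ->
  (forall m, (1 <= m)%nat -> exp (- ((r ^ 2 + r0 ^ 2) * fst (a_m gamma sigma L m))) <= e1) ->
  Rabs (Series (tn r phi r0 phi0)) <= (r * sqrt 2 * kap * e1 * (I0s (kap * r * r0) - / 2)) * Series bt.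
Proof.
  intros hr hr0 he. set (K := r * sqrt 2 * kap * e1 * (I0s (kap * r * r0) - / 2)).
  pose proof (ex_tn r phi r0 phi0 e1 hr hr0 he) as hex.
  assert (hb : forall n, Rabs (tn r phi r0 phi0 n) <= K * bt n).
  { intro n; apply tn_bound; auto. }
  apply Rabs_le. split.
  - replace (- (K * Series bt)) with (- K * Series bt) by ring. rewrite <- Series_scal_l.
    apply Series_mono. apply exs_scal, ex_bt. auto.
    intro n. specialize (hb n). apply Rabs_le_between in hb. lra.
  - rewrite <- Series_scal_l. apply Series_mono. auto. apply exs_scal, ex_bt.
    intro n. specialize (hb n). apply Rabs_le_between in hb. lra.
Qed.


Lemma pR_eq r r0 : 0 <= r -> 0 <= r0 -> pR gamma sigma L r r0 =
  2 * r * kap * exp (- (kap * (r ^ 2 + r0 ^ 2))) * I0s (kap * r * r0).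
Proof.
  intros hr hr0. pose proof kap_pos. unfold pR.
  assert (hd : 0 < sigma ^ 2 * L) by (apply Rmult_lt_0_compat; [apply pow_lt|]; lra).
  rewrite BesselI_R0.
  2:{ unfold Rdiv. repeat apply Rmult_le_pos; try lra. left; apply Rinv_0_lt_compat; auto. }
  replace (2 * r * r0 / (sigma ^ 2 * L) / 2) with (kap * r * r0) by (unfold kap; field; lra).
  replace (- (r ^ 2 + r0 ^ 2) / (sigma ^ 2 * L)) with (- (kap * (r ^ 2 + r0 ^ 2))) by (unfold kap; field; lra).
  unfold kap; field; lra.
Qed.

Lemma B_pos : 0 < Series bt.
Proof.
  pose proof (Series_ge_first bt (fun n => Rlt_le _ _ (bt_pos n)) ex_bt). pose proof (bt_pos 0). lra.
Qed.

Lemma RB : Rseries (bterm gamma sigma L) = Series bt.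
Proof. apply (Rseries_Series bt ex_bt). Qed.

Lemma main_in :
  (exists l : R, infinite_sum (bterm gamma sigma L) l) /\
  (forall r r0 phi phi0 : R, 0 < r -> 0 <= r0 ->
     0 <= phi < 2 * PI -> 0 <= phi0 < 2 * PI ->
     pdens gamma sigma L r phi r0 phi0 < k_u gamma sigma L * pR gamma sigma L r r0) /\
  (forall r r0 : R, 0 <= r -> 0 <= r0 ->
     pR gamma sigma L r r0
       <= 2 * r / (sigma ^ 2 * L) * exp (- (r - r0) ^ 2 / (sigma ^ 2 * L)) /\
     2 * r / (sigma ^ 2 * L) * exp (- (r - r0) ^ 2 / (sigma ^ 2 * L))
       <= 2 * r / (sigma ^ 2 * L)) /\
  (forall r r0 phi phi0 : R, 0 <= r -> 0 <= r0 ->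
     pdens gamma sigma L r phi r0 phi0
       >= / (2 * PI) * pR gamma sigma L r r0 * (1 - xi gamma sigma L r0)) /\
  (forall eps : R, 0 < eps -> exists M : R, forall r0 : R, M <= r0 ->
     Rabs (xi gamma sigma L r0) < eps).
Proof.
  pose proof kap_pos as hk. pose proof B_pos as hB. pose proof PI_RGT_0 as hpi.
  assert (hd : 0 < sigma ^ 2 * L) by (apply Rmult_lt_0_compat; [apply pow_lt|]; lra).
  set (B := Series bt) in *.
  set (A1 := fst (a_m gamma sigma L 1)).
  pose proof Re_a1_gt as hA1. fold A1 in hA1.
  assert (hxi : forall r0, xi gamma sigma L r0 = sqrt 2 * exp (- (A1 - kap) * r0 ^ 2) * B).
  { intro r0. unfold xi. rewrite RB. reflexivity. }
  assert (hs2 : 0 < sqrt 2) by (apply sqrt_lt_R0; lra).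
  split; [|split; [|split; [|split]]].
  - exists B. apply is_series_Reals. apply Series_correct, ex_bt.
  - intros r r0 phi phi0 hr hr0 _ _.
    set (J := I0s (kap * r * r0)). set (E := exp (- (kap * (r ^ 2 + r0 ^ 2)))).
    assert (hJ : 1 <= J) by (apply I0_ge1; repeat apply Rmult_le_pos; lra).
    assert (hE : 0 < E) by apply exp_pos.
    assert (he : forall m, (1 <= m)%nat -> exp (- ((r ^ 2 + r0 ^ 2) * fst (a_m gamma sigma L m))) <= E).
    { intros m hm. apply exp_mono. pose proof (Re_am_gt m hm). nra. }
    pose proof (Series_tn_le r phi r0 phi0 E ltac:(lra) hr0 he) as hS.
    fold J B in hS. apply Rabs_le_between in hS.
    rewrite pdens_eq. rewrite (Rseries_Series _ (ex_tn r phi r0 phi0 E ltac:(lra) hr0 he)).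
    rewrite pR_eq by lra. fold J E. unfold k_u. rewrite RB. fold B.
    replace (/ (2 * PI) * (1 + sqrt 2 * B) * (2 * r * kap * E * J)) with
      (/ (2 * PI) * (2 * r * kap * E * J) + / PI * (sqrt 2 * B * r * kap * E * J)) by (field; lra).
    apply Rplus_lt_compat_l. apply Rmult_lt_compat_l. apply Rinv_0_lt_compat; lra.
    assert (0 < sqrt 2 * B * r * kap * E) by (repeat apply Rmult_lt_0_compat; lra).
    assert (r * sqrt 2 * kap * E * (J - / 2) * B = sqrt 2 * B * r * kap * E * J - sqrt 2 * B * r * kap * E * / 2) by ring.
    lra.
  - intros r r0 hr hr0.
    rewrite pR_eq by lra.
    assert (hI : I0s (kap * r * r0) <= exp (2 * (kap * r * r0))) by (apply I0_le_exp; repeat apply Rmult_le_pos; lra).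
    replace (2 * r / (sigma ^ 2 * L)) with (2 * r * kap) by (unfold kap; field; lra).
    assert (hE2 : exp (- (kap * (r ^ 2 + r0 ^ 2))) * exp (2 * (kap * r * r0)) = exp (- (r - r0) ^ 2 / (sigma ^ 2 * L))).
    { rewrite <- exp_plus. f_equal. unfold kap. field. lra. }
    split.
    + rewrite <- hE2. rewrite <- Rmult_assoc. apply Rmult_le_compat_l.
      apply Rmult_le_pos. repeat apply Rmult_le_pos; lra. left; apply exp_pos. exact hI.
    + rewrite <- (Rmult_1_r (2 * r * kap)) at 2. apply Rmult_le_compat_l.
      repeat apply Rmult_le_pos; lra. rewrite <- exp_0. apply exp_mono.
      unfold Rdiv. pose proof (pow2_ge_0 (r - r0)). pose proof (Rinv_0_lt_compat _ hd). nra.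
  - intros r r0 phi phi0 hr hr0.
    set (J := I0s (kap * r * r0)). set (e1 := exp (- (kap * r ^ 2 + A1 * r0 ^ 2))).
    assert (hJ : 1 <= J) by (apply I0_ge1; repeat apply Rmult_le_pos; lra).
    assert (he : forall m, (1 <= m)%nat -> exp (- ((r ^ 2 + r0 ^ 2) * fst (a_m gamma sigma L m))) <= e1).
    { intros m hm. apply exp_mono. pose proof (Re_am_ge m hm). fold A1 in H.
      pose proof (pow2_ge_0 r). pose proof (pow2_ge_0 r0). nra. }
    pose proof (Series_tn_le r phi r0 phi0 e1 hr hr0 he) as hS.
    fold J B in hS. apply Rabs_le_between in hS.
    rewrite pdens_eq. rewrite (Rseries_Series _ (ex_tn r phi r0 phi0 e1 hr hr0 he)).
    rewrite pR_eq by lra. fold J. rewrite hxi.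
    set (E := exp (- (kap * (r ^ 2 + r0 ^ 2)))).
    assert (hEe : E * exp (- (A1 - kap) * r0 ^ 2) = e1).
    { unfold E, e1. rewrite <- exp_plus. f_equal. ring. }
    replace (/ (2 * PI) * (2 * r * kap * E * J) * (1 - sqrt 2 * exp (- (A1 - kap) * r0 ^ 2) * B))
      with (/ (2 * PI) * (2 * r * kap * E * J) - / PI * (r * sqrt 2 * kap * e1 * J * B))
      by (rewrite <- hEe; field; lra).
    apply Rle_ge. apply Rplus_le_compat_l.
    assert (0 <= r * sqrt 2 * kap * e1 * B) by (unfold e1; pose proof (exp_pos (- (kap * r ^ 2 + A1 * r0 ^ 2))); repeat apply Rmult_le_pos; lra).
    assert (hP : 0 < / PI) by (apply Rinv_0_lt_compat; lra).
    assert (- (r * sqrt 2 * kap * e1 * J * B) <= Series (tn r phi r0 phi0)) by nra.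
    nra.
  - intros eps heps.
    set (d := A1 - kap). assert (hdp : 0 < d) by (unfold d; lra).
    exists (Rmax 1 (sqrt 2 * B / (eps * d))). intros r0 hr0.
    pose proof (Rmax_l 1 (sqrt 2 * B / (eps * d))). pose proof (Rmax_r 1 (sqrt 2 * B / (eps * d))).
    rewrite hxi. fold d.
    assert (hX : sqrt 2 * B / eps < exp (d * r0 ^ 2)).
    { pose proof (exp_ineq1_le (d * r0 ^ 2)).
      assert (sqrt 2 * B / (eps * d) * d <= r0 * d) by (apply Rmult_le_compat_r; lra).
      replace (sqrt 2 * B / (eps * d) * d) with (sqrt 2 * B / eps) in H2 by (field; lra).
      assert (1 <= r0) by lra. assert (0 <= d * r0 * (r0 - 1)) by (repeat apply Rmult_le_pos; lra).
      assert (r0 * d <= d * r0 ^ 2) by nra. lra. }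
    assert (hinv : exp (- d * r0 ^ 2) = / exp (d * r0 ^ 2)).
    { rewrite <- exp_Ropp. f_equal. ring. }
    rewrite hinv. pose proof (exp_pos (d * r0 ^ 2)).
    rewrite Rabs_right.
    2:{ apply Rle_ge. repeat apply Rmult_le_pos; try lra. left; apply Rinv_0_lt_compat; lra. }
    apply (Rmult_lt_reg_r (exp (d * r0 ^ 2))); auto.
    replace (sqrt 2 * / exp (d * r0 ^ 2) * B * exp (d * r0 ^ 2)) with (sqrt 2 * B) by (field; lra).
    apply (Rmult_lt_compat_l eps) in hX; auto.
    replace (eps * (sqrt 2 * B / eps)) with (sqrt 2 * B) in hX by (field; lra). lra.
Qed.
End Main.

Theorem mainTheorem7 (gamma sigma L : R) (hg : 0 < gamma) (hs : 0 < sigma) (hL : 0 < L) :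
  (exists l : R, infinite_sum (bterm gamma sigma L) l) /\
  (forall r r0 phi phi0 : R, 0 < r -> 0 <= r0 ->
     0 <= phi < 2 * PI -> 0 <= phi0 < 2 * PI ->
     pdens gamma sigma L r phi r0 phi0 < k_u gamma sigma L * pR gamma sigma L r r0) /\
  (forall r r0 : R, 0 <= r -> 0 <= r0 ->
     pR gamma sigma L r r0
       <= 2 * r / (sigma ^ 2 * L) * exp (- (r - r0) ^ 2 / (sigma ^ 2 * L)) /\
     2 * r / (sigma ^ 2 * L) * exp (- (r - r0) ^ 2 / (sigma ^ 2 * L))
       <= 2 * r / (sigma ^ 2 * L)) /\
  (forall r r0 phi phi0 : R, 0 <= r -> 0 <= r0 ->
     pdens gamma sigma L r phi r0 phi0
       >= / (2 * PI) * pR gamma sigma L r r0 * (1 - xi gamma sigma L r0)) /\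
  (forall eps : R, 0 < eps -> exists M : R, forall r0 : R, M <= r0 ->
     Rabs (xi gamma sigma L r0) < eps).
Proof. apply main_in; assumption. Qed.
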